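(* Let $(g,n)\neq(0,1),(0,2)$ with $g\ge0,n\ge1$, and write $\vec P_{g,n}(\mu_1,\ldots,\mu_n)=\sum_{a_1,\ldots,a_n\ge0}C_{g,n}(a_1,\ldots,a_n)\mu_1^{a_1}\cdots\mu_n^{a_n}$ (finite sum). Then, substituting $x_i=\frac{z_i-1}{z_i^2}$, \[ F_{g,n}=\sum_{a_1,\ldots,a_n}C_{g,n}(a_1,\ldots,a_n)\prod_{i=1}^nf_{a_i}(z_i). \] In particular $F_{g,n}$ is (the expansion of) a symmetric rational function of $z_1,\ldots,z_n$ with poles only at $z_i=2$, $i=1,\ldots,n$.
   Context: Monotone Hurwitz numbers $\vec H_{g,n}(\mu_1,\ldots,\mu_n)$: with $|\boldsymbol\mu|=\sum\mu_i$ and $m=2g-2+n+|\boldsymbol\mu|$, it is $\frac{1}{|\boldsymbol\mu|!}$ times the number of $m$-tuples of transpositions $(\sigma_1,\ldots,\sigma_m)$ in $S_{|\boldsymbol\mu|}$, with a labelling of the cycles of $\sigma_1\circ\cdots\circ\sigma_m$ by $1,\ldots,n$ so that cycle $i$ has length $\mu_i$, such that the $\sigma_j$ generate a transitive subgroup and, writing $\sigma_j=(a_j\,b_j)$ with $a_j<b_j$, $b_1\le\cdots\le b_m$. Free energy $F_{g,n}(x_1,\ldots,x_n)=\sum_{\mu_i\ge1}\vec H_{g,n}(\boldsymbol\mu)\prod x_i^{\mu_i}$. Known polynomiality (Goulden–Guay-Paquet–Novak): $\vec H_{g,n}(\boldsymbol\mu)=\prod_i\binom{2\mu_i}{\mu_i}\cdot\vec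 P_{g,n}(\boldsymbol\mu)$ where, for $(g,n)\neq(0,1),(0,2)$, $\vec P_{g,n}$ is a symmetric polynomial with rational coefficients of degree $3g-3+n$. The variables are related by $x=\frac{z-1}{z^2}$ with $z=\frac{1-\sqrt{1-4x}}{2x}$ (so $z=1$ at $x=0$). Auxiliary functions: $f_a(z)=\sum_{\mu\ge1}\binom{2\mu}{\mu}\mu^ax^\mu=\big(-\frac{z(z-1)}{z-2}\frac{\partial}{\partial z}\big)^a\frac{2-2z}{z-2}$. *)

(* Defs.v *)
From HB Require Import structures.
From mathcomp Require Import all_boot all_order all_algebra all_fingroup.
From mathcomp Require Import all_classical all_reals all_analysis.

Set Implicit Arguments.
Unset Strict Implicit.
Unset Printing Implicit Defensive.

Import Order.TTheory GRing.Theory Num.Theory.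
Import numFieldNormedType.Exports.
Local Open Scope ring_scope.

Definition msize (n : nat) (mu : 'I_n -> nat) : nat := \sum_(i < n) mu i.

(* number of transpositions m = 2g - 2 + n + |mu| (n + |mu| >= 2 in all uses) *)
Definition mnum (g n : nat) (mu : 'I_n -> nat) : nat := (2 * g + n + msize mu - 2)%N.

(* m-tuples of transpositions sigma_j = (a_j b_j), encoded by the pairs
   (a_j, b_j) with a_j < b_j (a bijective encoding), with b_1 <= ... <= b_m. *)
Definition monotone_tuples (d m : nat) : {set {ffun 'I_m -> 'I_d * 'I_d}} :=
  [set s : {ffun 'I_m -> 'I_d * 'I_d} |
     [forall j, ((s j).1 < (s j).2)%N] &&
     [forall j : 'I_m, forall k : 'I_m, (j <= k)%N ==> ((s j).2 <= (s k).2)%N]].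

Definition transp_of (d m : nat) (s : {ffun 'I_m -> 'I_d * 'I_d}) (j : 'I_m)
  : {perm 'I_d} := tperm (s j).1 (s j).2.

(* sigma_1 o ... o sigma_m  (the cycle set does not depend on the
   composition convention, since reversing gives the inverse permutation) *)
Definition prod_transp (d m : nat) (s : {ffun 'I_m -> 'I_d * 'I_d}) : {perm 'I_d} :=
  (\prod_(j < m) transp_of s j)%g.

Definition transitive_tuple (d m : nat) (s : {ffun 'I_m -> 'I_d * 'I_d}) : bool :=
  [transitive <<[set transp_of s j | j : 'I_m]>>, on [set: 'I_d] | 'P].

Definition cycle_labellings (d n : nat) (mu : 'I_n -> nat) (p : {perm 'I_d})
  : {set {ffun 'I_n -> {set 'I_d}}} :=
  [set L : {ffun 'I_n -> {set 'I_d}} |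
     [&& injectiveb L, [set L i | i : 'I_n] == porbits p &
         [forall i, #|L i| == mu i]]].

Definition hurwitz_count (g n : nat) (mu : 'I_n -> nat) : nat :=
  let d := msize mu in
  let m := mnum g mu in
  \sum_(s in monotone_tuples d m | transitive_tuple s)
      #|cycle_labellings mu (prod_transp s)|.

Definition monotone_hurwitz (R : realType) (g n : nat) (mu : 'I_n -> nat) : R :=
  (hurwitz_count g mu)%:R / ((msize mu)`!)%:R.

(* ---------- Free energy: square partial sums of
   F_{g,n}(x) = sum_{mu_i >= 1} H_{g,n}(mu) prod x_i^{mu_i} ---------- *)
Definition free_energy_partial (R : realType) (g n : nat) (x : 'I_n -> R) (N : nat)
  : R :=
  \sum_(mu : {ffun 'I_n -> 'I_N} | [forall i, (0 < mu i)%N])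
     monotone_hurwitz R g (fun i => nat_of_ord (mu i)) * \prod_(i < n) x i ^+ mu i.

Definition x_of_z (R : realType) (z : R) : R := (z - 1) / z ^+ 2.

Fixpoint f_aux (R : realType) (a : nat) : R -> R :=
  match a with
  | 0 => fun z => (2 - 2 * z) / (z - 2)
  | a'.+1 => fun z => - (z * (z - 1) / (z - 2)) * derive1 (@f_aux R a') z
  end.

(* real z with 0 < z < 2 (the branch z = (1 - sqrt(1-4x))/(2x), z = 1 at x = 0)
   and |x| < 1/4, i.e. the region where the expansions converge *)
Definition z_region (R : realType) (z : R) : Prop :=
  0 < z < 2 /\ `| x_of_z z | < 4^-1.

(* Main.v *)
Require Import Defs.
From HB Require Import structures.
From mathcomp Require Import all_boot all_order all_algebra all_fingroup.
From mathcomp Require Import all_classical all_reals all_analysis.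
From mathcomp Require Import ring lra zify.
Set Implicit Arguments.
Unset Strict Implicit.
Unset Printing Implicit Defensive.
Import Order.TTheory GRing.Theory Num.Theory.
Import numFieldNormedType.Exports.
Local Open Scope classical_set_scope.
Local Open Scope ring_scope.


Section A.
Variable R : realType.

Lemma eqle (x y : R) : x = y -> x <= y. Proof. by move=> ->. Qed.

Lemma lerX (x y : R) n : 0 <= x -> x <= y -> x ^+ n <= y ^+ n.
Proof.
move=> x0 xy; apply: (@lerXn2r R n); rewrite ?nnegrE //; exact: le_trans xy.
Qed.

Lemma bernoulli_ineq (h : R) m : 0 <= h -> 1 + m%:R * h <= (1 + h) ^+ m.
Proof.
move=> h0; elim: m => [|m IH]; first by rewrite mul0r addr0 expr0.
rewrite exprS -natr1.
have : 0 <= m%:R * h * h by rewrite mulr_ge0 // mulr_ge0.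
nra.
Qed.

Lemma lin_geo_bound (w : R) : 0 < w < 1 -> forall m : nat, m.+2%:R * w ^+ m <= (1 - w)^-1 + 2.
Proof.
move=> /andP[w0 w1] m.
set h := w^-1 - 1.
have h0 : 0 <= h by rewrite /h subr_ge0 invf_ge1 // ltW.
have := bernoulli_ineq m h0.
have -> : 1 + h = w^-1 by rewrite /h addrC subrK.
rewrite exprVn => Hb.
have wm0 : 0 < w ^+ m by rewrite exprn_gt0.
have Hm : m%:R * w ^+ m * h <= 1.
  have := ler_wpM2r (ltW wm0) Hb. rewrite mulVf ?gt_eqF //. nra.
have -> : m.+2%:R = m%:R + 2 :> R by rewrite -addn2 natrD.
have wm1 : w ^+ m <= 1 by rewrite exprn_ile1 // ltW.
have Hh : h = (1 - w) / w by rewrite /h mulrBl mulfV ?gt_eqF // div1r.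
have : m%:R * w ^+ m <= w / (1 - w).
  rewrite ler_pdivlMr ?subr_gt0 //.
  move: Hm; rewrite Hh => Hm.
  have : m%:R * w ^+ m * ((1 - w) / w) * w <= w by nra.
  by rewrite -!mulrA mulVf ?gt_eqF // mulr1 mulrA.
have -> : w / (1 - w) = (1 - w)^-1 - 1.
  by field; rewrite subr_eq0 gt_eqF.
lra.
Qed.

Lemma poly_geo_bound (p : nat) : forall q : R, 0 <= q < 1 ->
  exists B : R, forall m : nat, m.+2%:R ^+ p * q ^+ m <= B.
Proof.
elim: p => [|p IH] q /andP[q0 q1].
  exists 1 => m; rewrite expr0 mul1r.
  exact: exprn_ile1 q0 (ltW q1).

set w := (1 + q) / 2.
have w0 : 0 < w by rewrite /w divr_gt0 // ltr_pwDl.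
have w1 : w < 1 by rewrite /w ltr_pdivrMr //; lra.
have qw : q <= w * w by rewrite /w; nra.
have [B HB] := IH w (andb_true_intro (conj (ltW w0) w1)).
exists (B * ((1 - w)^-1 + 2)) => m.
have Hl := lin_geo_bound (andb_true_intro (conj w0 w1)) m.
have Hqm : q ^+ m <= w ^+ m * w ^+ m.
  rewrite -exprMn; apply: lerXn2r => //; rewrite nnegrE //.
  by rewrite mulr_ge0 // ltW.
rewrite exprS.
have e0 : 0 <= m.+2%:R ^+ p :> R by rewrite exprn_ge0.
have e1 : 0 <= m.+2%:R :> R by [].
apply: (le_trans (y := m.+2%:R * m.+2%:R ^+ p * (w ^+ m * w ^+ m))).
  by rewrite -!mulrA ler_wpM2l // ler_wpM2l.
have -> : m.+2%:R * m.+2%:R ^+ p * (w ^+ m * w ^+ m) = (m.+2%:R ^+ p * w ^+ m) * (m.+2%:R * w ^+ m) by ring.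
apply: ler_pM => //; rewrite ?mulr_ge0 // ?exprn_ge0 // ?ltW //.
Qed.

Lemma series_poly_geo (p : nat) (q : R) : 0 <= q < 1 ->
  cvgn (series (fun m : nat => m.+2%:R ^+ p * q ^+ m)).
Proof.
move=> /andP[q0 q1].
set w := (1 + q) / 2.
have w0 : 0 < w by rewrite /w divr_gt0 // ltr_pwDl.
have w1 : w < 1 by rewrite /w ltr_pdivrMr //; lra.
have qw : q < w by rewrite /w ltr_pdivlMr //; lra.
have qw0 : 0 <= q / w by rewrite divr_ge0 // ltW.
have qw1 : q / w < 1 by rewrite ltr_pdivrMr // mul1r.
have [B HB] := poly_geo_bound p (andb_true_intro (conj qw0 qw1)).
apply: (@series_le_cvg _ _ (geometric B w)).
- by move=> m; rewrite mulr_ge0 // exprn_ge0.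
- have B0 : 0 <= B.
    by apply: le_trans (HB 0%N); rewrite mulr_ge0 // exprn_ge0.
  by move=> m /=; rewrite mulr_ge0 // ?exprn_ge0 // ?ltW.
- move=> m /=.
  have -> : q ^+ m = (q / w) ^+ m * w ^+ m by rewrite -exprMn divfK // gt_eqF.
  by rewrite mulrA ler_wpM2r // exprn_ge0 // ltW.
- by apply: is_cvg_geometric_series; rewrite ger0_norm // ltW.
Qed.

Lemma pseries_cvg (c : nat -> R) (M : R) p (y : R) : 0 <= M ->
  (forall m, `|c m| <= M * 4 ^+ m * m.+2%:R ^+ p) -> `|y| < 4^-1 ->
  cvgn (pseries c y).
Proof.
move=> M0 Hc Hy.
apply: normed_cvg.
have q0 : 0 <= 4 * `|y| by rewrite mulr_ge0.
have q1 : 4 * `|y| < 1.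
  have : 4 * `|y| < 4 * 4^-1 by rewrite ltr_pM2l.
  by rewrite mulfV.
apply: (@series_le_cvg _ _ (fun m => M * (m.+2%:R ^+ p * (4 * `|y|) ^+ m))).
- by move=> m /=.
- by move=> m; rewrite mulr_ge0 // mulr_ge0 // exprn_ge0.
- move=> m /=; rewrite normrM normrX.
  apply: le_trans (ler_wpM2r _ (Hc m)) _; first by rewrite exprn_ge0.
  by rewrite exprMn le_eqVlt; apply/orP; left; apply/eqP; ring.
- have := @series_poly_geo p _ (andb_true_intro (conj q0 q1)).
  move=> /(@is_cvg_seriesZ _ _ M).
  by congr (cvgn (series _)); apply/funext => m.
Qed.
End A.

Lemma binc_rec m : (m.+1 * 'C(m.+1.*2, m.+1) = (m.*2.+1).*2 * 'C(m.*2, m))%N.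
Proof.
rewrite doubleS binS.
have e : 'C(m.*2.+1, m) = 'C(m.*2.+1, m.+1).
  rewrite -[RHS]bin_sub; last by rewrite ltnS -addnn leq_addl.
  congr 'C(_, _); rewrite -addnn; lia.
rewrite -e.
have := mul_bin_diag m.*2.+1 m; rewrite /= => h.
rewrite -e in h. nia.
Qed.

Lemma binc_le m : ('C(m.*2, m) <= 4 ^ m)%N.
Proof.
elim: m => [|m IH] //.
have h := binc_rec m.
have : (m.+1 * 'C(m.+1.*2, m.+1) <= m.+1 * 4 ^ m.+1)%N.
  rewrite h expnS.
  have : ((m.*2.+1).*2 <= 4 * m.+1)%N by rewrite -!addnn; lia.
  move=> h2; apply: leq_trans (leq_mul h2 IH) _; lia.
by rewrite leq_pmul2l.
Qed.

Definition cf (R : realType) (a m : nat) : R :=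
  if m is 0 then 0 else ('C(m.*2, m))%:R * m%:R ^+ a.

Section B.
Variable R : realType.

Lemma cf_bound a m : `|cf R a m| <= 1 * 4 ^+ m * m.+2%:R ^+ a.
Proof.
case: m => [|m]; first by rewrite /= normr0 mulr_ge0 // exprn_ge0.
rewrite /cf normrM normrX !ger0_norm // mul1r.
apply: ler_pM; rewrite ?exprn_ge0 //.
  by rewrite -natrX ler_nat binc_le.
by apply: lerX; rewrite ?ler_nat //; lia.
Qed.

Lemma pd_bound (c : nat -> R) M p : 0 <= M ->
  (forall m, `|c m| <= M * 4 ^+ m * m.+2%:R ^+ p) ->
  forall m, `|pseries_diffs c m| <= (4 * M * 2 ^+ p) * 4 ^+ m * m.+2%:R ^+ p.+1.
Proof.
move=> M0 Hc m; rewrite /pseries_diffs normrM ger0_norm //.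
apply: le_trans (ler_wpM2l _ (Hc m.+1)) _ => //.
have h1 : m.+3%:R ^+ p <= 2 ^+ p * m.+2%:R ^+ p :> R.
  rewrite -exprMn; apply: lerXn2r => //; rewrite ?nnegrE // -natrM ler_nat; lia.
have h2 : m.+1%:R <= m.+2%:R :> R by rewrite ler_nat.
rewrite exprS [m.+2%:R ^+ p.+1]exprS.
have e0 : 0 <= 4 ^+ m :> R by rewrite exprn_ge0.
have e1 : 0 <= m.+2%:R ^+ p :> R by rewrite exprn_ge0.
have e2 : 0 <= 2 ^+ p :> R by rewrite exprn_ge0.
have e3 : 0 <= m.+3%:R ^+ p :> R by rewrite exprn_ge0.
have e4 : 0 <= M * 4 ^+ m by rewrite mulr_ge0.
have : m.+1%:R * (M * (4 * 4 ^+ m) * m.+3%:R ^+ p) <= m.+2%:R * (M * (4 * 4 ^+ m) * (2 ^+ p * m.+2%:R ^+ p)).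
  apply: ler_pM => //; first by rewrite !mulr_ge0.
  by apply: ler_wpM2l => //; rewrite !mulr_ge0.
move=> h; apply: le_trans h _; apply: eqle; ring.
Qed.

Lemma pd_bound1 a m : `|pseries_diffs (cf R a) m| <= (4 * 1 * 2 ^+ a) * 4 ^+ m * m.+2%:R ^+ a.+1.
Proof. by apply: pd_bound => // k; apply: cf_bound. Qed.

Lemma pd_bound2 a m : `|pseries_diffs (pseries_diffs (cf R a)) m| <=
   (4 * (4 * 1 * 2 ^+ a) * 2 ^+ a.+1) * 4 ^+ m * m.+2%:R ^+ a.+2.
Proof. apply: pd_bound; first by rewrite !mulr_ge0 // exprn_ge0. exact: pd_bound1. Qed.

Lemma cvg_cf a y : `|y| < 4^-1 -> cvgn (pseries (cf R a) y).
Proof. by apply: pseries_cvg (cf_bound a) => //. Qed.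

Lemma cvg_pd1 a y : `|y| < 4^-1 -> cvgn (pseries (pseries_diffs (cf R a)) y).
Proof. apply: pseries_cvg (pd_bound1 a) => //; by rewrite !mulr_ge0 // exprn_ge0. Qed.

Lemma cvg_pd2 a y : `|y| < 4^-1 -> cvgn (pseries (pseries_diffs (pseries_diffs (cf R a))) y).
Proof. apply: pseries_cvg (pd_bound2 a) => //; by rewrite !mulr_ge0 // exprn_ge0. Qed.

Definition S a (x : R) := limn (pseries (cf R a) x).
Definition Dd a (x : R) := limn (pseries (pseries_diffs (cf R a)) x).

Lemma S_der a (x : R) : `|x| < 4^-1 -> is_derive x (1:R) (S a) (Dd a x).
Proof.
move=> hx; set K := (`|x| + 4^-1) / 2.
have K0 : 0 <= K by rewrite /K divr_ge0 // addr_ge0.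
have hK : K < 4^-1 by rewrite /K ltr_pdivrMr //; lra.
have hxK : `|x| < `|K| by rewrite [`|K|]ger0_norm // /K ltr_pdivlMr //; lra.
have hK' : `|K| < 4^-1 by rewrite ger0_norm.
have := pseries_snd_diffs (cvg_cf (a:=a) hK') (cvg_pd1 (a:=a) hK') (cvg_pd2 (a:=a) hK') hxK.
by [].
Qed.

Lemma S_succ a x : `|x| < 4^-1 -> x * Dd a x = S a.+1 x.
Proof.
move=> hx.
have h1 := cvg_pd1 (a:=a) hx.
have h2 : (fun n => x * pseries (pseries_diffs (cf R a)) x n) @ \oo --> x * Dd a x.
  by apply: cvgM => //; exact: cvg_cst.
have e : forall n, pseries (cf R a.+1) x n.+1 = x * pseries (pseries_diffs (cf R a)) x n.
  move=> n; rewrite /pseries /series /= big_nat_recl // mulr_sumr /= mul0r add0r.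
  apply: eq_bigr => k _; rewrite /pseries_diffs /cf (exprS x) (exprS (k.+1%:R)); ring.
have h3 : pseries (cf R a.+1) x @ \oo --> x * Dd a x.
  rewrite -cvg_shiftS.
  have -> : [sequence pseries (cf R a.+1) x n.+1]_n = (fun n => x * pseries (pseries_diffs (cf R a)) x n).
    by apply/funext => n; rewrite /= e.
  exact: h2.
by rewrite /S (cvg_lim _ h3).
Qed.
End B.


Section C.
Variable R : realType.

Lemma x_der (z : R) : z != 0 -> is_derive z (1:R) (@x_of_z R) ((2 - z) / z ^+ 3).
Proof.
move=> z0.
have h1 := is_deriveB (is_derive_id z (1:R)) (is_derive_cst (1:R) z (1:R)).
have h2 := is_deriveX 2 (is_derive_id z (1:R)).
have nz : (id ^+ 2 : R -> R) z != 0.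
  have -> : (id ^+ 2 : R -> R) z = z ^+ 2 by rewrite exprfctE.
  by rewrite expf_neq0.
have h3 := is_deriveV nz h2.
have h4 := is_deriveM h1 h3.
have e : (@x_of_z R) = (id - cst 1) * (fun w => ((id ^+ 2 : R -> R) w)^-1).
  by apply/funext => w; rewrite /x_of_z.
rewrite e; apply: is_derive_eq h4 _.
rewrite /= /GRing.scale /= exprfctE /=.
have -> : (id - cst 1 : R -> R) z = z - 1 by [].
by field.
Qed.

Lemma x_cont (z : R) : z != 0 -> (@x_of_z R) @ z --> x_of_z z.
Proof.
move=> z0; have [d _] := x_der z0.
exact/differentiable_continuous/derivable1_diffP.
Qed.

Lemma region_open (z : R) : z_region z -> \forall w \near z, z_region w.
Proof.
move=> [/andP[z0 z2] hx].
have hc : (fun w => `|x_of_z w|) @ z --> `|x_of_z z|.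
  by apply: cvg_norm; apply: x_cont; rewrite gt_eqF.
near=> w; split; last by near: w; apply: cvgr_lt hc _ hx.
apply/andP; split.
  by near: w; apply: lt_nbhsr.
by near: w; apply: lt_nbhsl.
Unshelve. all: by end_near.
Qed.

Lemma x_mono (u v : R) : 0 < u -> u <= v -> v < 2 -> x_of_z u <= x_of_z v.
Proof.
move=> u0 uv v2.
have v0 : 0 < v by apply: lt_le_trans uv.
rewrite /x_of_z -subr_ge0.
have -> : (v - 1) / v ^+ 2 - (u - 1) / u ^+ 2 = (v - u) * (u + v - u * v) / (u ^+ 2 * v ^+ 2).
  by field; rewrite ?gt_eqF.
apply: divr_ge0; last by rewrite mulr_ge0 // exprn_ge0 // ltW.
apply: mulr_ge0; first by rewrite subr_ge0.
nra.
Qed.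

Lemma x_one : x_of_z (1:R) = 0.
Proof. by rewrite /x_of_z subrr mul0r. Qed.

Lemma region_between (z w : R) : z_region z ->
  (Num.min 1 z <= w <= Num.max 1 z) -> z_region w.
Proof.
move=> [/andP[z0 z2] hx] /andP[h1 h2].
have [z1|z1] := leP 1 z.
  move: h1 h2; rewrite (min_l z1) (max_r z1) => h1 h2.
  have w0 : 0 < w by lra.
  have w2 : w < 2 by lra.
  split; first by rewrite w0 w2.
  have a1 := x_mono ltr01 h1 w2; have a2 := x_mono w0 h2 z2.
  rewrite x_one in a1.
  rewrite ger0_norm //; apply: le_lt_trans hx; rewrite ger0_norm //; exact: le_trans a2.
move: h1 h2; rewrite (min_r (ltW z1)) (max_l (ltW z1)) => h1 h2.
have w0 : 0 < w by lra.
have w2 : w < 2 by lra.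
split; first by rewrite w0 w2.
have a1 := x_mono z0 h1 w2; have a2 := x_mono w0 h2 (ltr1n R 2).
rewrite x_one in a2.
rewrite ler0_norm //; apply: le_lt_trans hx; rewrite ler0_norm ?lerN2 //; exact: le_trans a2.
Qed.
End C.


Section D.
Variable R : realType.

Lemma bR_rec m : m.+1%:R * ('C(m.+1.*2, m.+1))%:R = (4 * m%:R + 2) * ('C(m.*2, m))%:R :> R.
Proof.
rewrite -!natrM binc_rec natrM; congr (_ * _).
rewrite -!muln2 natrM -addn1 natrD natrM; ring.
Qed.

Lemma ode_partial (x : R) n :
  pseries (pseries_diffs (cf R 0)) x n.+1 - 4 * x * pseries (pseries_diffs (cf R 0)) x n
  = 2 + 2 * pseries (cf R 0) x n.+1.
Proof.
elim: n => [|n IH].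
  rewrite /pseries /series /= !big_nat1 big_nil /pseries_diffs /cf /=.
  by rewrite (_ : 'C(1.*2, 1) = 2%N) //; ring.
have e1 : forall (f : nat -> R) k, pseries f x k.+1 = pseries f x k + f k * x ^+ k.
  by move=> f k; rewrite /pseries /series /= big_nat_recr.
have E1 := e1 (pseries_diffs (cf R 0)) n.+1.
have E2 := e1 (pseries_diffs (cf R 0)) n.
have E3 := e1 (cf R 0) n.+1.
have h : pseries_diffs (cf R 0) n.+1 * x ^+ n.+1 - 4 * x * (pseries_diffs (cf R 0) n * x ^+ n)
   = 2 * (cf R 0 n.+1 * x ^+ n.+1).
  rewrite /pseries_diffs /cf !expr0 !mulr1 bR_rec exprS; ring.
rewrite E1 E3 [X in 4 * x * X]E2.
have -> : 2 + 2 * (pseries (cf R 0) x n.+1 + cf R 0 n.+1 * x ^+ n.+1) =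
  (pseries (pseries_diffs (cf R 0)) x n.+1 - 4 * x * pseries (pseries_diffs (cf R 0)) x n) + 2 * (cf R 0 n.+1 * x ^+ n.+1).
  by rewrite IH; ring.
rewrite -h E2; ring.
Qed.

Lemma ode (x : R) : `|x| < 4^-1 -> (1 - 4 * x) * Dd 0 x = 2 * (1 + S 0 x).
Proof.
move=> hx.
have hP := cvg_pd1 (a:=0) hx.
have hQ := cvg_cf (a:=0) hx.
have hP1 : [sequence pseries (pseries_diffs (cf R 0)) x n.+1]_n @ \oo --> Dd 0 x.
  by rewrite cvg_shiftS.
have hQ1 : [sequence pseries (cf R 0) x n.+1]_n @ \oo --> S 0 x.
  by rewrite cvg_shiftS.
have L1 : (fun n => pseries (pseries_diffs (cf R 0)) x n.+1 - 4 * x * pseries (pseries_diffs (cf R 0)) x n)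
   @ \oo --> Dd 0 x - 4 * x * Dd 0 x.
  apply: cvgB; first exact: hP1.
  by apply: cvgM => //; exact: cvg_cst.
have L2 : (fun n => 2 + 2 * pseries (cf R 0) x n.+1) @ \oo --> 2 + 2 * S 0 x.
  apply: cvgD; first exact: cvg_cst.
  by apply: cvgM => //; exact: cvg_cst.
have e : (fun n => pseries (pseries_diffs (cf R 0)) x n.+1 - 4 * x * pseries (pseries_diffs (cf R 0)) x n)
   = (fun n => 2 + 2 * pseries (cf R 0) x n.+1).
  by apply/funext => n; exact: ode_partial.
rewrite e in L1.
have h : Dd 0 x - 4 * x * Dd 0 x = 2 + 2 * S 0 x.
  exact: (cvg_unique (@Rhausdorff R) L1 L2).
rewrite mulrBl mul1r h; ring.
Qed.

Definition psi (w : R) := (S 0 (x_of_z w) + 1) * ((2 - w) / w).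

Lemma region_x (z : R) : z_region z -> `|x_of_z z| < 4^-1.
Proof. by case. Qed.

Lemma region_neq0 (z : R) : z_region z -> z != 0.
Proof. by case=> /andP[z0 _] _; rewrite gt_eqF. Qed.

Lemma region_neq2 (z : R) : z_region z -> z - 2 != 0.
Proof. by case=> /andP[_ z2] _; rewrite subr_eq0 lt_eqF. Qed.

Lemma psi_der w : z_region w -> is_derive w (1:R) psi 0.
Proof.
move=> hw.
have w0 := region_neq0 hw; have w2 := region_neq2 hw.
have hx := x_der w0.
have hS := S_der 0 (region_x hw).
have hc := is_derive1_comp hS hx.
have hA := is_deriveD hc (is_derive_cst (1:R) w (1:R)).
have hB1 := is_deriveB (is_derive_cst (2:R) w (1:R)) (is_derive_id w (1:R)).
have nz : (id : R -> R) w != 0 by [].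
have hB2 := is_deriveV nz (is_derive_id w (1:R)).
have hB := is_deriveM hB1 hB2.
have hP := is_deriveM hA hB.
have e : psi = (S 0 \o @x_of_z R + cst 1) * ((cst 2 - id) * (fun y => (id y)^-1)).
  by apply/funext => y; rewrite /psi.
rewrite e; apply: is_derive_eq hP _.
have hode := ode (region_x hw).
set D := Dd 0 (x_of_z w) in hode *; set Sx := S 0 (x_of_z w) in hode *.
have hode' : 2 * (1 + Sx) = (w - 2) ^+ 2 / w ^+ 2 * D.
  by rewrite -hode /x_of_z; congr (_ * _); field.
have hD : D = 2 * (1 + Sx) * w ^+ 2 / (w - 2) ^+ 2.
  by rewrite hode'; field; rewrite ?w0 ?w2.
rewrite /= /GRing.scale /=.
have -> : (S 0 \o x_of_z (R:=R) + cst 1) w = Sx + 1 by [].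
have -> : (cst 2 - id : R -> R) w = 2 - w by [].
have -> : ((cst 2 - id) * [eta GRing.inv] : R -> R) w = (2 - w) / w by [].
rewrite hD; field; exact/andP.

Qed.

Lemma S0_zero : S 0 (0 : R) = 0.
Proof.
rewrite /S.
have -> : pseries (cf R 0) 0 = (fun _ => 0).
  apply/funext => n; rewrite /pseries /series /=; apply: big1 => k _.
  by case: k => [|k]; rewrite ?expr0n /= ?mul0r ?mulr0.
by rewrite lim_cst.
Qed.

Lemma psi_seg (a b : R) : a <= b -> (forall y, a <= y <= b -> z_region y) -> psi b = psi a.
Proof.
move=> hab hreg.
have hd : forall y, y \in `]a, b[ -> is_derive y (1:R) psi 0.
  move=> y; rewrite in_itv /= => /andP[h1 h2]; apply: psi_der; apply: hreg.
  by rewrite !ltW.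
have hc : {within `[a, b], continuous psi}.
  apply: continuous_in_subspaceT => y yin.
  have hy : z_region y by apply: hreg; move: yin; rewrite inE /= in_itv /=.
  have [d _] := psi_der hy.
  exact/differentiable_continuous/derivable1_diffP.
have [c _ hc2] := MVT_segment hab hd hc.
by apply/eqP; rewrite -subr_eq0 hc2 mul0r.
Qed.

Lemma psi_const (z : R) : z_region z -> psi z = psi 1.
Proof.
move=> hz.
case: (leP 1 z) => z1.
  apply: (psi_seg z1) => y hy; apply: (region_between hz).
  by rewrite (min_l z1) (max_r z1).
apply/esym; apply: (psi_seg (ltW z1)) => y hy; apply: (region_between hz).
by rewrite (min_r (ltW z1)) (max_l (ltW z1)).
Qed.

Lemma f_aux0 (z : R) : z_region z -> f_aux 0 z = S 0 (x_of_z z).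
Proof.
move=> hz; have := psi_const hz.
have z0 := region_neq0 hz; have z2 := region_neq2 hz.
rewrite {2}/psi x_one S0_zero /psi /=.
set Sx := S 0 (x_of_z z) => h.
have h1 : (0 + 1) * ((2 - 1) / 1) = 1 :> R by rewrite add0r mul1r divr1 -[2]/(1 + 1) addrK.
rewrite h1 in h.
have hz2 : 2 - z != 0 by rewrite -opprB oppr_eq0.
have h' : Sx = z / (2 - z) - 1.
  have -> : z / (2 - z) = (Sx + 1) * ((2 - z) / z) * (z / (2 - z)) by rewrite h mul1r.
  by field; apply/andP.
rewrite h'; field; exact/andP.
Qed.

Lemma f_aux_S a (z : R) : z_region z -> f_aux a z = S a (x_of_z z).
Proof.
elim: a z => [|a IH] z hz; first exact: f_aux0.
have z0 := region_neq0 hz; have z2 := region_neq2 hz.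
rewrite /= derive1E.
have hn : \near z, f_aux a z = (S a \o @x_of_z R) z.
  by apply: filterS (region_open hz) => w hw; rewrite IH.
rewrite (near_eq_derive _ hn).
have hd := is_derive1_comp (S_der a (region_x hz)) (x_der z0).
rewrite derive_val -(S_succ a (region_x hz)) /x_of_z.
by field; apply/andP.
Qed.
End D.


Section E.
Variable R : realType.

Lemma prod_pseries n (a : 'I_n -> nat) (x : 'I_n -> R) N :
  \prod_(i < n) pseries (cf R (a i)) (x i) N =
  \sum_(mu : {ffun 'I_n -> 'I_N} | [forall i, (0 < mu i)%N])
     \prod_(i < n) (cf R (a i) (mu i) * x i ^+ mu i).
Proof.
have e : forall i, pseries (cf R (a i)) (x i) N = \sum_(k < N) cf R (a i) k * x i ^+ k.
  by move=> i; rewrite /pseries /series /= big_mkord.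
under eq_bigr do rewrite e.
rewrite bigA_distr_bigA /= [LHS](bigID (fun mu : {ffun 'I_n -> 'I_N} => [forall i, (0 < mu i)%N])) /=.
rewrite [X in _ + X]big1 ?addr0 // => mu.
rewrite negb_forall => /existsP[i hi].
apply/eqP/prodf_eq0; exists i => //=.
by move: hi; rewrite lt0n negbK => /eqP ->; rewrite /cf mul0r.
Qed.

Lemma partial_eq (g n D : nat) (Cf : {ffun 'I_n -> 'I_D} -> R) (x : 'I_n -> R) N :
  (forall mu : 'I_n -> nat, (forall i, (0 < mu i)%N) ->
     monotone_hurwitz R g mu =
       (\prod_(i < n) ('C((mu i).*2, mu i))%:R) *
       \sum_(a : {ffun 'I_n -> 'I_D}) Cf a * \prod_(i < n) ((mu i)%:R ^+ a i)) ->
  @free_energy_partial R g n x N =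
  \sum_(a : {ffun 'I_n -> 'I_D}) Cf a * \prod_(i < n) pseries (cf R (a i)) (x i) N.
Proof.
move=> hyp.
under [RHS]eq_bigr do rewrite prod_pseries mulr_sumr.
rewrite exchange_big /free_energy_partial; apply: eq_bigr => mu hmu.
rewrite hyp; last by move=> i; move/forallP: hmu; apply.
rewrite mulr_sumr mulr_suml; apply: eq_bigr => a _.
have e : forall i, cf R (a i) (mu i) * x i ^+ mu i =
   ('C((mu i : nat).*2, mu i))%:R * ((mu i : nat)%:R ^+ a i * x i ^+ mu i).
  move=> i; move/forallP: hmu => /(_ i); case: (mu i : nat) => [|k] //= _.
  by rewrite /cf mulrA.
rewrite (eq_bigr _ (fun i _ => e i)).
rewrite big_split big_split /=.
ring.
Qed.

Lemma limit_main (g n D : nat) (Cf : {ffun 'I_n -> 'I_D} -> R) (z : 'I_n -> R) :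
  (forall mu : 'I_n -> nat, (forall i, (0 < mu i)%N) ->
     monotone_hurwitz R g mu =
       (\prod_(i < n) ('C((mu i).*2, mu i))%:R) *
       \sum_(a : {ffun 'I_n -> 'I_D}) Cf a * \prod_(i < n) ((mu i)%:R ^+ a i)) ->
  (forall i, z_region (z i)) ->
  @free_energy_partial R g n (fun i => x_of_z (z i)) N @[N --> \oo] -->
    \sum_(a : {ffun 'I_n -> 'I_D}) Cf a * \prod_(i < n) f_aux (a i) (z i).
Proof.
move=> hyp hz.
have -> : (fun N => @free_energy_partial R g n (fun i => x_of_z (z i)) N) =
  (fun N => \sum_(a : {ffun 'I_n -> 'I_D}) Cf a * \prod_(i < n) pseries (cf R (a i)) (x_of_z (z i)) N).
  by apply/funext => N; apply: partial_eq.
apply: (@cvg_big _ _ +%R 0 xpredT add_continuous) => a _.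
apply: cvgM; first exact: cvg_cst.
apply: (@cvg_big R _ *%R 1 xpredT (@mul_continuous R)) => i _.
rewrite f_aux_S //.
exact: cvg_cf (region_x (hz i)).
Qed.
End E.

Local Close Scope classical_set_scope.

Definition HC (g n : nat) (mu : 'I_n -> nat) d m : nat :=
  \sum_(s in monotone_tuples d m | transitive_tuple s)
      #|cycle_labellings (d := d) mu (prod_transp s)|.

Lemma hurwitz_HC g n (mu : 'I_n -> nat) :
  hurwitz_count g mu = HC g mu (msize mu) (mnum g mu).
Proof. by []. Qed.

Lemma msize_perm n (mu : 'I_n -> nat) (s : 'S_n) : msize (fun i => mu (s i)) = msize mu.
Proof. by rewrite /msize [RHS](reindex_inj (@perm_inj _ s)). Qed.

Lemma cl_le d n (mu : 'I_n -> nat) (s : 'S_n) (p : {perm 'I_d}) :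
  (#|cycle_labellings mu p| <= #|cycle_labellings (fun i => mu (s i)) p|)%N.
Proof.
set f := fun L : {ffun 'I_n -> {set 'I_d}} => [ffun i => L (s i)].
have finj : injective f.
  move=> L1 L2 /ffunP h; apply/ffunP => i.
  by have := h (s^-1 i)%g; rewrite !ffunE permKV.
rewrite -(card_imset _ finj); apply: subset_leq_card.

apply/fintype.subsetP => _ /imsetP[L hL ->].
move: hL; rewrite !inE => /and3P[/injectiveP Linj /eqP Lim /forallP Lc].
apply/and3P; split.
- by apply/injectiveP => i j; rewrite !ffunE => /Linj /perm_inj.
- rewrite -Lim; apply/eqP/setP => X; apply/imsetP/imsetP => [[i _ ->]|[i _ ->]].
    by exists (s i) => //; rewrite ffunE.
  by exists (s^-1 i)%g => //; rewrite ffunE permKV.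
- by apply/forallP => i; rewrite ffunE Lc.
Qed.

Lemma cl_eq d n (mu : 'I_n -> nat) (s : 'S_n) (p : {perm 'I_d}) :
  #|cycle_labellings (fun i => mu (s i)) p| = #|cycle_labellings mu p|.
Proof.
apply/eqP; rewrite eqn_leq cl_le andbT.
have := cl_le (fun i => mu (s i)) (s^-1)%g p.
have -> : (fun i => mu (s ((s^-1)%g i))) = mu by apply/funext => i; rewrite permKV.
by [].
Qed.

Lemma hurwitz_perm (R : realType) g n (mu : 'I_n -> nat) (s : 'S_n) :
  monotone_hurwitz R g (fun i => mu (s i)) = monotone_hurwitz R g mu.
Proof.
rewrite /monotone_hurwitz !hurwitz_HC /mnum !msize_perm.
congr (_%:R / _); apply: eq_bigr => t _; exact: cl_eq.
Qed.

Lemma partial_perm (R : realType) g n (x : 'I_n -> R) (s : 'S_n) N :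
  @free_energy_partial R g n (fun i => x (s i)) N = @free_energy_partial R g n x N.
Proof.
rewrite /free_energy_partial.
set phi := fun nu : {ffun 'I_n -> 'I_N} => [ffun i => nu (s i)].
have pinj : injective phi.
  move=> L1 L2 /ffunP h; apply/ffunP => i.
  by have := h (s^-1 i)%g; rewrite !ffunE permKV.
rewrite [LHS](reindex_inj pinj); apply: eq_big => nu.
  apply/forallP/forallP => h i.
    by have := h (s^-1 i)%g; rewrite /phi ffunE permKV.
  by rewrite /phi ffunE.
move=> _.
have -> : (fun i => nat_of_ord (phi nu i)) = (fun i => nat_of_ord (nu (s i))).
  by apply/funext => i; rewrite /phi ffunE.
rewrite (hurwitz_perm R g (fun i => nat_of_ord (nu i)) s); congr (_ * _).
rewrite [RHS](reindex_inj (@perm_inj _ s)); apply: eq_bigr => i _.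
by rewrite /phi ffunE.
Qed.

Local Open Scope classical_set_scope.
Local Open Scope ring_scope.

Fixpoint Pa (R : realType) (a : nat) : {poly R} :=
  if a is a'.+1 then
    - ('X * ('X - 1)) * ((Pa R a')^`() * ('X - 2%:P) - (a'.*2.+1)%:R *: Pa R a')
  else 2%:P - 2%:P * 'X.

Section G.
Variable R : realType.

Lemma near_neq2 (z : R) : z - 2 != 0 -> \forall w \near z, w - 2 != 0.
Proof.
rewrite subr_eq0 => hz.
case: (ltgtP z 2) hz => // h _.
  by near=> w; rewrite subr_eq0 lt_eqF //; near: w; apply: lt_nbhsl.
by near=> w; rewrite subr_eq0 gt_eqF //; near: w; apply: lt_nbhsr.
Unshelve. all: by end_near.
Qed.

Lemma f_aux_P a (z : R) : z - 2 != 0 -> f_aux a z = (Pa R a).[z] / (z - 2) ^+ a.*2.+1.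
Proof.
elim: a z => [|a IH] z hz.
  by rewrite /= !hornerE expr1.
rewrite /= derive1E.
set k := a.*2.+1.
have hn : \near z, f_aux a z = (fun w => (Pa R a).[w] / (w - 2) ^+ k) z.
  by apply: filterS (near_neq2 hz) => w hw; rewrite IH.
rewrite (near_eq_derive _ hn).
have h1 := is_derive_poly (Pa R a) z.
have h2 := is_deriveX k (is_deriveB (is_derive_id z (1:R)) (is_derive_cst (2:R) z (1:R))).
have nz : ((id - cst 2) ^+ k : R -> R) z != 0.
  by rewrite exprfctE expf_neq0.
have h3 := is_deriveV nz h2.
have h4 := is_deriveM h1 h3.
have e : (fun w => (Pa R a).[w] / (w - 2) ^+ k) =
   horner (Pa R a) * (fun w => (((id - cst 2) ^+ k : R -> R) w)^-1).
  by apply/funext => w; rewrite /= exprfctE.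
rewrite e derive_val.
rewrite [in X in _ * X = _]/GRing.scale /= !exprfctE.
have -> : (id - cst 2 : R -> R) z = z - 2 by [].
rewrite !hornerE.
set P := (Pa R a).[z]; set P' := (Pa R a)^`().[z].

have -> : a.+1.*2.+1 = (a.*2 + 3)%N by rewrite doubleS; lia.
rewrite /k -addn1 !exprD expr1.
set t := (z - 2) ^+ a.*2.
have t0 : t != 0 by rewrite expf_neq0.
simpl.
have E : (z - (1 + 1)%:R) ^+ a.*2.+1 = (z - 2) * t by rewrite exprS.
rewrite E.
have hz' : z - (1 + 1)%:R != 0 by [].
by field; apply/andP.
Qed.
End G.

Local Close Scope classical_set_scope.

Section H.
Variable R : realType.
Variables (n D : nat) (Cf : {ffun 'I_n -> 'I_D} -> R).

Definition kk := D.*2.+1.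
Definition Qp (a : nat) : {poly R} := Pa R a * ('X - 2%:P) ^+ (kk - a.*2.+1).
Definition KK := (\sum_(a < D) size (Qp a))%N.

Lemma Q_eval (a : 'I_D) (z : R) : z - 2 != 0 ->
  (Qp a).[z] / (z - 2) ^+ kk = (Pa R a).[z] / (z - 2) ^+ (a : nat).*2.+1.
Proof.
move=> hz; rewrite /Qp hornerM horner_exp hornerD hornerN hornerX hornerC.
have ha : ((a : nat).*2.+1 <= kk)%N by rewrite /kk ltnS leq_double ltnW.
rewrite -{2}(subnK ha) exprD.
have h1 : (z - 2) ^+ (kk - (a : nat).*2.+1) != 0 by rewrite expf_neq0.
have h2 : (z - 2) ^+ (a : nat).*2.+1 != 0 by rewrite expf_neq0.
by field; apply/andP.
Qed.

Lemma Q_size (a : 'I_D) : (size (Qp a) <= KK)%N.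
Proof.
by rewrite /KK (bigD1 a) //= leq_addr.
Qed.

Definition c0 (e : {ffun 'I_n -> 'I_KK}) : R :=
  \sum_(a : {ffun 'I_n -> 'I_D}) Cf a * \prod_(i < n) (Qp (a i))`_(e i).

Definition cc (e : {ffun 'I_n -> 'I_KK}) : R :=
  (n`!%:R)^-1 * \sum_(s : 'S_n) c0 [ffun i => e (s i)].

Definition den (z : 'I_n -> R) := \prod_(i < n) (z i - 2) ^+ kk.

Definition Gq (z : 'I_n -> R) :=
  \sum_(a : {ffun 'I_n -> 'I_D}) Cf a * \prod_(i < n) ((Qp (a i)).[z i] / (z i - 2) ^+ kk).

Definition ratfH (z : 'I_n -> R) :=
  (\sum_(e : {ffun 'I_n -> 'I_KK}) cc e * \prod_(i < n) z i ^+ e i) /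
  \prod_(i < n) (z i - 2) ^+ kk.

Lemma num0_eq (z : 'I_n -> R) :
  \sum_e c0 e * \prod_(i < n) z i ^+ e i =
  \sum_(a : {ffun 'I_n -> 'I_D}) Cf a * \prod_(i < n) (Qp (a i)).[z i].
Proof.
have e1 : forall a : {ffun 'I_n -> 'I_D}, \prod_(i < n) (Qp (a i)).[z i] =
   \sum_(e : {ffun 'I_n -> 'I_KK}) \prod_(i < n) ((Qp (a i))`_(e i) * z i ^+ e i).
  move=> a; rewrite (eq_bigr _ (fun i _ => horner_coef_wide (z i) (Q_size (a i)))).
  by rewrite bigA_distr_bigA.
under [RHS]eq_bigr do rewrite e1 mulr_sumr.
rewrite exchange_big; apply: eq_bigr => e _.
rewrite /c0 mulr_suml; apply: eq_bigr => a _.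
by rewrite big_split mulrA.
Qed.

Lemma num_perm (s : 'S_n) (z : 'I_n -> R) :
  \sum_(e : {ffun 'I_n -> 'I_KK}) c0 [ffun i => e (s i)] * \prod_(i < n) z i ^+ e i =
  \sum_e c0 e * \prod_(i < n) z (s i) ^+ e i.
Proof.
set phi := fun e : {ffun 'I_n -> 'I_KK} => [ffun i => e (s i)].
have pinj : injective phi.
  move=> L1 L2 /ffunP h; apply/ffunP => i.
  by have := h (s^-1 i)%g; rewrite !ffunE permKV.
rewrite [RHS](reindex_inj pinj); apply: eq_bigr => e _; congr (_ * _).
rewrite [LHS](reindex_inj (@perm_inj _ s)); apply: eq_bigr => i _.
by rewrite /phi ffunE.
Qed.

Lemma den_perm (s : 'S_n) (z : 'I_n -> R) : den (fun i => z (s i)) = den z.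
Proof. by rewrite /den [RHS](reindex_inj (@perm_inj _ s)). Qed.

Lemma Gq_eq (z : 'I_n -> R) : Gq z = (\sum_(a : {ffun 'I_n -> 'I_D}) Cf a * \prod_(i < n) (Qp (a i)).[z i]) / den z.
Proof.
rewrite /Gq mulr_suml; apply: eq_bigr => a _.
by rewrite prodf_div mulrA.
Qed.

Lemma ratf_eq (z : 'I_n -> R) : ratfH z = (n`!%:R)^-1 * \sum_(s : 'S_n) Gq (fun i => z (s i)).
Proof.
rewrite /ratfH.
under eq_bigr do rewrite /cc -mulrA mulr_suml.
rewrite -mulr_sumr exchange_big /= -mulrA mulr_suml; congr (_ * _).
apply: eq_bigr => s _.
by rewrite num_perm num0_eq Gq_eq den_perm /den.
Qed.

Lemma ratf_sym (z : 'I_n -> R) (t : 'S_n) : ratfH (fun i => z (t i)) = ratfH z.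
Proof.
rewrite !ratf_eq; congr (_ * _).
rewrite [RHS](reindex_inj (@mulIg _ t)); apply: eq_bigr => s _.
by congr (Gq _); apply/funext => i; rewrite permM.
Qed.
End H.

Unset Implicit Arguments.
Set Strict Implicit.
Local Open Scope classical_set_scope.
Local Open Scope ring_scope.

Lemma Gq_region (R : realType) n D (Cf : {ffun 'I_n -> 'I_D} -> R) (y : 'I_n -> R) :
  (forall i, z_region (y i)) ->
  Gq Cf y = \sum_(a : {ffun 'I_n -> 'I_D}) Cf a * \prod_(i < n) f_aux (a i) (y i).
Proof.
move=> hy; apply: eq_bigr => a _; congr (_ * _); apply: eq_bigr => i _.
rewrite Q_eval ?region_neq2 // f_aux_P //; exact: region_neq2.
Qed.

Theorem corollary2p9 (R : realType) (g n : nat) (D : nat)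
    (C : {ffun 'I_n -> 'I_D} -> rat) :
  (1 <= n)%N ->
  ~ (g = 0%N /\ (n <= 2)%N) ->
  (forall mu : 'I_n -> nat, (forall i, (0 < mu i)%N) ->
     monotone_hurwitz R g mu =
       (\prod_(i < n) ('C((mu i).*2, mu i))%:R) *
       \sum_(a : {ffun 'I_n -> 'I_D}) ratr (C a) * \prod_(i < n) ((mu i)%:R ^+ a i)) ->
  (forall z : 'I_n -> R, (forall i, z_region (z i)) ->
     @free_energy_partial R g n (fun i => x_of_z (z i)) N @[N --> \oo] -->
       \sum_(a : {ffun 'I_n -> 'I_D}) ratr (C a) * \prod_(i < n) @f_aux R (a i) (z i))
  /\
  (exists (K k : nat) (c : {ffun 'I_n -> 'I_K} -> R),
     let ratf := fun z : 'I_n -> R =>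
       (\sum_(e : {ffun 'I_n -> 'I_K}) c e * \prod_(i < n) z i ^+ e i) /
       \prod_(i < n) (z i - 2) ^+ k in
     (forall z : 'I_n -> R, (forall i, z_region (z i)) ->
        @free_energy_partial R g n (fun i => x_of_z (z i)) N @[N --> \oo] --> ratf z)
     /\
     (forall (z : 'I_n -> R) (s : 'S_n), (forall i, z i != 2) ->
        ratf (fun i => z (s i)) = ratf z)).
Proof.
move=> _ _ hyp.
set Cf := fun a => (ratr (C a) : R).
have L : forall z : 'I_n -> R, (forall i, z_region (z i)) ->
     @free_energy_partial R g n (fun i => x_of_z (z i)) N @[N --> \oo] -->
       \sum_(a : {ffun 'I_n -> 'I_D}) Cf a * \prod_(i < n) @f_aux R (a i) (z i).
  by move=> z hz; exact: (limit_main (Cf := Cf) hyp hz).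
split; first exact: L.
exists (KK R D), (kk D), (cc Cf) => ratf.
have eqr : forall z, ratf z = ratfH Cf z by [].
split; last by move=> z s _; rewrite !eqr ratf_sym.
move=> z hz; rewrite eqr ratf_eq.
set G := \sum_(a : {ffun 'I_n -> 'I_D}) Cf a * \prod_(i < n) @f_aux R (a i) (z i).
have hs : forall s : 'S_n, Gq Cf (fun i => z (s i)) = G.
  move=> s.
  have hzs : forall i, z_region (z (s i)) by move=> i; exact: hz.
  rewrite Gq_region //.
  have l1 := L _ hzs.
  have e : (fun N => @free_energy_partial R g n (fun i => x_of_z (z (s i))) N) =
           (fun N => @free_energy_partial R g n (fun i => x_of_z (z i)) N).
    apply/funext => N; have := partial_perm g (fun i => x_of_z (z i)) s N; by [].
  rewrite e in l1.
  exact: (cvg_unique (@Rhausdorff R) l1 (L z hz)).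
rewrite (eq_bigr _ (fun s _ => hs s)).
have hc : (\sum_(s : 'S_n) G) = G *+ n`!.
  rewrite sumr_const -card_Sn; congr (_ *+ _); apply: eq_card => x; by [].
rewrite hc -[G *+ _]mulr_natl mulrA mulVf ?mul1r.
  exact: L.
by rewrite pnatr_eq0 -lt0n fact_gt0.
Qed.
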